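(* For $n\ge 2$, the star $K_{1,n}$ satisfies $\nu^*(K_{1,n})=\frac{5n^2+n}{2}$.
   Context: For a finite simple graph $G=(V,E)$ with $\ell=|V|+|E|$, a construction sequence (c-sequence) is a bijection $x:\{1,\dots,\ell\}\to V\sqcup E$ such that every edge $e=uw$ satisfies $x^{-1}(e)>\max\{x^{-1}(u),x^{-1}(w)\}$. The cost of $x$ is $\nu(x)=\sum_{e=uw\in E}\big(2x^{-1}(e)-x^{-1}(u)-x^{-1}(w)\big)$, and $\nu^*(G)$ is the maximum of $\nu(x)$ over all c-sequences for $G$. $K_{1,n}$ is the star with one hub vertex adjacent to $n$ leaves. *)

(* Defs.v *)
From mathcomp Require Import all_boot all_order all_algebra.
Set Implicit Arguments. Unset Strict Implicit. Unset Printing Implicit Defensive.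
Import GRing.Theory Num.Theory.

(* A finite simple graph is given by a vertex finType T and a symmetric,
   irreflexive adjacency relation adj.  Elements of V ⊔ E are encoded in T + {set T}:
   inl v for vertices, inr E for edges. *)

Definition edge_set (T : finType) (adj : rel T) : {set {set T}} :=
  [set E : {set T} | [exists u, exists w, adj u w && (E == [set u; w])]].

Definition graph_elems (T : finType) (adj : rel T) : seq (T + {set T}) :=
  map inl (enum T) ++ map inr (enum (edge_set adj)).

(* The position of a in s is x^{-1}(a). *)
Definition pos (T : finType) (s : seq (T + {set T})) (a : T + {set T}) : nat :=
  (index a s).+1.

Definition is_cseq (T : finType) (adj : rel T) (s : seq (T + {set T})) : Prop :=
  perm_eq s (graph_elems adj) /\
  forall E, E \in edge_set adj -> forall u, u \in E ->
    pos s (inl u) < pos s (inr E).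

Definition cost (T : finType) (adj : rel T) (s : seq (T + {set T})) : int :=
  \sum_(E in edge_set adj) \sum_(u in E)
     ((pos s (inr E))%:Z - (pos s (inl u))%:Z).

Definition max_cost_is (T : finType) (adj : rel T) (m : int) : Prop :=
  (exists s, is_cseq adj s /\ cost adj s = m) /\
  (forall s, is_cseq adj s -> (cost adj s <= m)%R).

Definition star_adj (n : nat) : rel 'I_n.+1 :=
  fun i j => (i != j) && ((i == ord0) || (j == ord0)).

(* Main.v *)
Require Import Defs.
From mathcomp Require Import all_boot all_order all_algebra.
From mathcomp Require Import zify.
From mathcomp Require Import ring.
Import GRing.Theory Num.Theory.

Set Implicit Arguments. Unset Strict Implicit. Unset Printing Implicit Defensive.

Section Star.
Variable n : nat.
Local Notation T := 'I_n.+1.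
Definition fE (k : 'I_n) : {set T} := [set ord0; lift ord0 k].

Lemma fE_inj : injective fE.
Proof.
move=> k1 k2 /setP /(_ (lift ord0 k1)).
rewrite /fE !inE eqxx orbT => /esym /orP [].
  by rewrite eq_sym (negbTE (neq_lift _ _)).
by move/eqP/lift_inj.
Qed.

Lemma edge_set_star : edge_set (@star_adj n) = [set fE k | k in 'I_n].
Proof.
apply/setP => E; rewrite inE; apply/existsP/imsetP.
  case=> u /existsP [w /andP [/andP [Huw Hz] /eqP ->]].
  case/orP: Hz => /eqP Hz; subst.
    case: (unliftP ord0 w) => [k ->|Hw]; first by exists k.
    by rewrite Hw eqxx in Huw.
  case: (unliftP ord0 u) => [k ->|Hu]; last by rewrite Hu eqxx in Huw.
  by exists k => //; rewrite /fE setUC.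
case=> k _ ->; exists ord0; apply/existsP; exists (lift ord0 k).
by rewrite /star_adj /= /fE eqxx.
Qed.

Lemma sum_edges (R : Type) (idx : R) (op : Monoid.com_law idx) (F : {set T} -> R) :
  \big[op/idx]_(E in edge_set (@star_adj n)) F E = \big[op/idx]_(k < n) F (fE k).
Proof.
rewrite edge_set_star big_imset //; by move=> ? ? _ _ /fE_inj.
Qed.

Lemma card_edges : #|edge_set (@star_adj n)| = n.
Proof. by rewrite edge_set_star card_imset ?card_ord //; apply: fE_inj. Qed.


Lemma sum_index (U : eqType) (s : seq U) (F : nat -> nat) :
  uniq s -> \sum_(x <- s) F (index x s) = \sum_(k < size s) F k.
Proof.
elim: s F => [|x s IH] F /=; first by rewrite big_nil big_ord0.
case/andP=> xs us; rewrite big_cons big_ord_recl /= eqxx; congr (_ + _).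
rewrite -(IH (fun k => F k.+1)) // big_seq_cond [RHS]big_seq_cond.
apply: eq_bigr => y /andP [ys _].
have -> : (x == y) = false by apply/negbTE; apply: contraNneq xs => ->.
by [].
Qed.

Lemma top_bound N (t : seq nat) : uniq t -> all (fun x => x <= N) t ->
  \sum_(x <- t) x <= \sum_(k < size t) (N - k).
Proof.
elim: N t => [|N IH] t ut Hat.
  rewrite big_seq big1 // => x xt; move/allP: Hat => /(_ x xt); lia.
case: (boolP (N.+1 \in t)) => Nt.
  have pt := perm_to_rem Nt.
  rewrite (perm_big _ pt) big_cons (perm_size pt) /= big_ord_recl /=.
  rewrite subn0 leq_add2l.
  have ur : uniq (rem N.+1 t) by apply: rem_uniq.
  have ar : all (fun x => x <= N) (rem N.+1 t).
    apply/allP => x; rewrite mem_rem_uniq // inE => /andP [xN xt].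
    move/allP: Hat => /(_ x xt); move: xN => /eqP; lia.
  apply: leq_trans (IH _ ur ar) _.
  apply: eq_leq; apply: eq_bigr => i _; rewrite /bump /=; lia.
have Hat2 : all (fun x => x <= N) t.
  apply/allP => x xt; move/allP: Hat => /(_ x xt).
  have : x != N.+1 by apply: contraNneq Nt => <-.
  move/eqP; lia.
apply: leq_trans (IH _ ut Hat2) _.
apply: leq_sum => i _; lia.
Qed.

Lemma sum_desc m N : m <= N -> 2 * \sum_(k<m) (N - k) + m * m = m * (2*N+1).
Proof.
elim: m => [|m IH] h; first by rewrite big_ord0.
rewrite big_ord_recr /=.
have -> : \sum_(i < m) (N - widen_ord (leqnSn m) i) = \sum_(k<m) (N - k) by [].
have := IH (ltnW h); nia.
Qed.

Lemma sum_asc m c : 2 * \sum_(k<m) (c + k) + m = m * (2*c+m).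
Proof.
elim: m => [|m IH]; first by rewrite big_ord0.
rewrite big_ord_recr /=.
have -> : \sum_(i < m) (c + widen_ord (leqnSn m) i) = \sum_(k<m) (c + k) by [].
nia.
Qed.

Lemma graph_elems_uniq : uniq (graph_elems (@star_adj n)).
Proof.
rewrite /graph_elems cat_uniq; apply/and3P; split.
- by rewrite map_inj_uniq ?enum_uniq // => ? ? [].
- apply/hasPn => x /mapP [E _ ->]; apply/mapP => [[v _]] //.
- by rewrite map_inj_uniq ?enum_uniq // => ? ? [].
Qed.

Lemma size_graph_elems : size (graph_elems (@star_adj n)) = (2 * n).+1.
Proof.
rewrite /graph_elems size_cat !size_map -!cardE card_edges -enumT -cardE card_ord; lia.
Qed.

Lemma cost_star s : cost (@star_adj n) s =
  ((\sum_(k<n) 2 * pos s (inr (fE k)))%:Z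
   - (\sum_(k<n) (pos s (inl ord0) + pos s (inl (lift ord0 k))))%:Z)%R.
Proof.
have hP : forall (F : 'I_n -> nat), ((\sum_(k<n) F k)%N%:Z = \sum_(k<n) (F k)%:Z)%R.
  by move=> F; rewrite (big_morph Posz PoszD (erefl (Posz 0))).
rewrite /cost sum_edges /= !hP -sumrB.
apply: eq_bigr => k _.
rewrite /fE big_setU1 /=; last by rewrite inE neq_lift.
rewrite big_set1 /=. rewrite mul2n -addnn !PoszD opprD !addrA; ring.
Qed.

Lemma pos_le (s : seq (T + {set T})) x : x \in s -> pos s x <= size s.
Proof. by rewrite /pos index_mem. Qed.

Lemma pos_inj (s : seq (T + {set T})) x y : x \in s -> y \in s -> pos s x = pos s y -> x = y.
Proof.
move=> xs ys [] h.
by rewrite -(nth_index x xs) -(nth_index x ys) h.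
Qed.

Lemma upper s : is_cseq (@star_adj n) s -> 1 <= n ->
  (cost (@star_adj n) s <= ((5 * n ^ 2 + n) %/ 2)%:Z)%R.
Proof.
case=> ps _ n1.
have us : uniq s by rewrite (perm_uniq ps) graph_elems_uniq.
have ss : size s = (2 * n).+1 by rewrite (perm_size ps) size_graph_elems.
have mem_e : forall k, inr (fE k) \in s.
  move=> k; rewrite (perm_mem ps) mem_cat; apply/orP; right; apply: map_f.
  by rewrite mem_enum edge_set_star imset_f.
have tot : \sum_(x <- s) pos s x = \sum_(k < size s) k.+1.
  exact: (sum_index succn us).
rewrite (perm_big _ ps) /graph_elems big_cat !big_map /= big_enum /= in tot.
rewrite -enumT big_enum /= sum_edges big_ord_recl /= in tot.
have hasc := sum_asc (size s) 1.
rewrite (_ : \sum_(k < size s) k.+1 = \sum_(k < size s) (1 + k)) // in tot.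
set SA := \sum_(k < n) pos s (inr (fE k)) in tot.
set SB := \sum_(k < n) pos s (inl (lift ord0 k)) in tot.
set p := pos s (inl ord0) in tot.
have p1 : 1 <= p by [].
have bnd : SA <= \sum_(k < n) ((2 * n).+1 - k).
  have := @top_bound (2 * n).+1 [seq pos s (inr (fE k)) | k <- enum 'I_n].
  rewrite big_map big_enum /= size_map -cardE card_ord; apply.
    rewrite map_inj_uniq ?enum_uniq // => k1 k2 /(pos_inj (mem_e k1) (mem_e k2)).
    by case=> /fE_inj.
  apply/allP => x /mapP [k _ ->]; rewrite -ss; apply: pos_le; exact: mem_e.
have hd := @sum_desc n (2 * n).+1 (leqW (leq_pmull _ (isT : 0 < 2))).
rewrite cost_star.
have -> : \sum_(k < n) 2 * pos s (inr (fE k)) = 2 * SA by rewrite big_distrr.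
rewrite big_split /= sum_nat_const card_ord -/SB -/p.
have h4 : n * p + 1 >= n + p by nia.
move: tot hasc bnd hd h4; rewrite ss; nia.
Qed.

Definition s0 : seq (T + {set T}) :=
  inl ord0 :: [seq inl v | v <- [seq lift ord0 k | k <- enum 'I_n]]
            ++ [seq inr E | E <- [seq fE k | k <- enum 'I_n]].

Lemma inl_inj' : injective (@inl T {set T}). Proof. by move=> ? ? []. Qed.
Lemma inr_inj' : injective (@inr T {set T}). Proof. by move=> ? ? []. Qed.

Lemma pos0 : pos s0 (inl ord0) = 1.
Proof. by []. Qed.

Lemma posL (k : 'I_n) : pos s0 (inl (lift ord0 k)) = k.+2.
Proof.
rewrite /pos /s0 /= index_cat map_f ?map_f ?mem_enum //.
rewrite index_map ?index_map -?enumT ?index_enum_ord //; [exact: lift_inj | exact: inl_inj'].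
Qed.

Lemma posE (k : 'I_n) : pos s0 (inr (fE k)) = n + k.+2.
Proof.
rewrite /pos /s0 /= index_cat.
have -> : (inr (fE k) \in [seq inl v | v <- [seq lift ord0 k | k <- enum 'I_n]]) = false.
  by apply/negbTE/mapP => -[].
rewrite !size_map -enumT size_enum_ord index_map ?index_map ?index_enum_ord -?enumT ?index_enum_ord; [lia | by [] | exact: fE_inj | exact: inr_inj'].
Qed.

Lemma s0_cseq : is_cseq (@star_adj n) s0.
Proof.
split.
  have u0 : uniq s0.
    rewrite /s0 cons_uniq cat_uniq !map_inj_uniq -?enumT ?enum_uniq //;
      [ | exact: fE_inj | exact: inr_inj' | exact: lift_inj | exact: inl_inj'].
    rewrite /= andbT mem_cat negb_or; apply/andP; split; [apply/andP; split|].
    + apply/mapP => -[v /mapP [k _ ->]] /inl_inj' /eqP; by rewrite (negbTE (neq_lift ord0 k)).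
    + by apply/mapP => -[].
    + by apply/hasPn => x /mapP [E _ ->]; apply/mapP => -[].
  apply: (uniq_perm u0 graph_elems_uniq).
  case=> [v|E]; rewrite /s0 /graph_elems in_cons !mem_cat.
    have -> : ((inl v : T + {set T}) \in [seq inl i | i <- enum T]) = true.
      by rewrite (mem_map inl_inj') mem_enum.
    rewrite /=.
    case: (unliftP ord0 v) => [k ->|<-]; last by rewrite eqxx.
    by rewrite (mem_map inl_inj') map_f ?mem_enum // orbT.
  rewrite !(mem_map inr_inj') /=.
  have -> : (inr E \in [seq inl v | v <- [seq lift ord0 k | k <- enum 'I_n]]) = false.
    by apply/negbTE/mapP => -[].
  have -> : (inr E \in [seq inl v | v <- enum T]) = false.
    by apply/negbTE/mapP => -[].
  rewrite /= edge_set_star.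
  rewrite mem_enum; by apply/mapP/imsetP => -[k _ ->]; exists k; rewrite ?mem_enum.
rewrite edge_set_star => E /imsetP [k _ ->] u.
rewrite /fE !inE => /orP [] /eqP ->; rewrite posE ?pos0 ?posL; have := ltn_ord k; lia.
Qed.

Lemma s0_cost : cost (@star_adj n) s0 = (((5 * n ^ 2 + n) %/ 2)%N%:Z)%R.
Proof.
rewrite cost_star.
have e1 : \sum_(k < n) 2 * pos s0 (inr (fE k)) = 2 * \sum_(k < n) ((n + 2) + k).
  by rewrite big_distrr /=; apply: eq_bigr => i _; rewrite posE; lia.
have e2 : \sum_(k < n) (pos s0 (inl ord0) + pos s0 (inl (lift ord0 k)))
          = \sum_(k < n) (3 + k).
  by apply: eq_bigr => i _; rewrite pos0 posL; lia.
rewrite e1 e2.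
have h1 := sum_asc n (n + 2).
have h2 := sum_asc n 3.
have -> : 2 * \sum_(k < n) ((n + 2) + k) =
   \sum_(k < n) (3 + k) + (5 * n ^ 2 + n) %/ 2.
  move: h1 h2; rewrite expnS expn1; lia.
rewrite PoszD; ring.
Qed.
End Star.

Theorem theorem2 (n : nat) (hn : (2 <= n)%N) :
  max_cost_is (@star_adj n) (((5 * n ^ 2 + n) %/ 2)%N)%:Z.
Proof.
split.
  by exists (s0 n); split; [exact: s0_cseq | exact: s0_cost].
move=> s hs.
have n1 : (1 <= n)%N by apply: leq_trans hn.
exact: (upper hs n1).
Qed.
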